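(* Consider an instance of the Unknown Value Probing (UVP) problem (defined in the context) with finite configuration set $\mathcal{X}\subset\mathbb{R}^d$, maximum per-configuration budget $T\in\mathbb{N}$, total budget $B$, and unknown value function $A$ satisfying the monotonicity and smoothness assumptions with parameter $\epsilon>0$. Let $k=\lfloor B/T\rfloor$ and let $r_k^\star$ be the optimal $k$-center radius of $\mathcal{X}$. Then the algorithm FullCent achieves a $(1-2\epsilon r_k^\star)$-approximation for the UVP problem: the configuration $\hat{\mathbf{x}}$ it returns satisfies $A(\hat{\mathbf{x}},T)\ge (1-2\epsilon r_k^\star)\,A(\mathbf{x}^\star,T)$, where $\mathbf{x}^\star\in\arg\max_{\mathbf{x}\in\mathcal{X}}A(\mathbf{x},T)$.
   Context: UVP problem: $A:\mathbb{R}^d\times[T]\to[0,1]$ is an unknown function ($[T]=\{1,\dots,T\}$); $\mathcal{X}=\{\mathbf{x}_1,\dots,\mathbf{x}_n\}\subset\mathbb{R}^d$ is known. The goal is $\max_{b_1,\dots,b_n}\max_{i}A(\mathbf{x}_i,b_i)$ subject to $\sum_i b_i\le B$, $b_i\in[T]$. Values are revealed only by evaluation; obtaining $A(\mathbf{x},b)$ requires evaluating $A(\mathbf{x},1),\dots,A(\mathbf{x},b)$ sequentially, costing $b$ units of budget. Assumption 1 (monotonicity): for every $\mathbf{x}$, $b_1\le b_2\Rightarrow A(\mathbf{x},b_1)\le A(\mathbf{x},b_2)$. Assumption 2 (smoothness): for all $\mathbf{x}_i,\mathbf{x}_j\in\mathcal{X}$, $\min_{b\in[T]} A(\mathbf{x}_i,b)/A(\mathbf{x}_j,b)\ge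 1-\epsilon\|\mathbf{x}_i-\mathbf{x}_j\|_2$, with the conventions that the ratio is $1$ if both values are $0$ and $+\infty$ if $A(\mathbf{x}_j,b)=0<A(\mathbf{x}_i,b)$. The optimal $k$-center radius is $r_k^\star=\min_{\mathcal{C}\subseteq\mathcal{X},|\mathcal{C}|=k}\max_{\mathbf{x}\in\mathcal{X}}\min_{\mathbf{c}\in\mathcal{C}}\|\mathbf{x}-\mathbf{c}\|_2$. Greedy $k$-center $\textsc{KCenter}(k,\mathcal{C},\mathcal{X})$: starting from $\mathcal{C}^{(0)}=\mathcal{C}$, for $i=1,\dots,k$ choose $\mathbf{c}_i\in\arg\max_{\mathbf{x}\in\mathcal{X}\setminus\mathcal{C}^{(i-1)}}\min_{\mathbf{c}\in\mathcal{C}^{(i-1)}}\|\mathbf{x}-\mathbf{c}\|_2$ (a minimum over the empty set is $+\infty$, ties broken arbitrarily), set $\mathcal{C}^{(i)}=\mathcal{C}^{(i-1)}\cup\{\mathbf{c}_i\}$, and return the new centers $\{\mathbf{c}_1,\dots,\mathbf{c}_k\}$. FullCent$(B,T,\mathcal{X})$: set $k=\lfloor B/T\rfloor$, compute $\mathcal{C}=\textsc{KCenter}(k,\emptyset,\mathcal{X})$, evaluate each $\mathbf{c}\in\mathcal{C}$ at budgets $1,\dots,T$, and return $\arg\max_{\mathbf{c}\in\mathcal{C}}A(\mathbf{c},T)$. *)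

(* Defs.v *)
From HB Require Import structures.
From mathcomp Require Import all_boot all_order all_algebra.
From mathcomp Require Import reals constructive_ereal.
Set Implicit Arguments. Unset Strict Implicit. Unset Printing Implicit Defensive.
Import Order.TTheory GRing.Theory Num.Theory.
Local Open Scope ring_scope.
Local Open Scope ereal_scope.

Section UVP.
Variable R : realType.

Definition edist (d : nat) (v w : 'rV[R]_d) : R :=
  Num.sqrt (\sum_(l < d) (v ord0 l - w ord0 l) ^+ 2).

(* A(x_i,b)/A(x_j,b) with the paper's conventions: 1 if both are 0,
   +oo if the denominator is 0 and the numerator is positive. *)
Definition uvp_ratio (a c : R) : \bar R :=
  if c == 0%R then (if a == 0%R then 1%E else +oo) else (a / c)%:E.

Definition monotone_A (d T : nat) (A : 'rV[R]_d -> nat -> R) : Prop :=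
  forall (v : 'rV[R]_d) (b1 b2 : nat),
    (1 <= b1)%N -> (b1 <= b2)%N -> (b2 <= T)%N -> (A v b1 <= A v b2)%R.

Definition smooth_A (d n : nat) (x : 'I_n -> 'rV[R]_d) (T : nat)
    (A : 'rV[R]_d -> nat -> R) (eps : R) : Prop :=
  forall i j : 'I_n,
    \big[mine/+oo]_(b < T) uvp_ratio (A (x i) b.+1) (A (x j) b.+1)
      >= (1 - eps * edist (x i) (x j))%:E.

(* distance from point y to a set of centers C (min over empty set = +oo) *)
Definition dist_to (d n : nat) (x : 'I_n -> 'rV[R]_d) (C : seq 'I_n) (y : 'I_n)
  : \bar R := \big[mine/+oo]_(c <- C) (edist (x y) (x c))%:E.

Definition kradius (d n : nat) (x : 'I_n -> 'rV[R]_d) (C : {set 'I_n}) : \bar R :=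
  \big[maxe/0%E]_(i < n) dist_to x (enum C) i.

(* optimal k-center radius r_k^* (as an extended real; finite when 1 <= k <= n) *)
Definition opt_kradius (d n : nat) (x : 'I_n -> 'rV[R]_d) (k : nat) : \bar R :=
  \big[mine/+oo]_(C : {set 'I_n} | #|C| == k) kradius x C.

(* greedy_ok x C cs : the sequence cs of new centers is a possible execution
   (for some tie-breaking) of the greedy k-center procedure started at C. *)
Fixpoint greedy_ok (d n : nat) (x : 'I_n -> 'rV[R]_d) (C : seq 'I_n)
    (cs : seq 'I_n) : Prop :=
  match cs with
  | [::] => True
  | c :: cs' =>
      c \notin C /\
      (forall y : 'I_n, y \notin C -> dist_to x C y <= dist_to x C c) /\
      greedy_ok x (c :: C) cs'
  end.

Definition kcenter_run (d n : nat) (x : 'I_n -> 'rV[R]_d) (k : nat)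
    (C : seq 'I_n) (cs : seq 'I_n) : Prop :=
  size cs = k /\ greedy_ok x C cs.

Definition fullcent_output (d n : nat) (x : 'I_n -> 'rV[R]_d)
    (A : 'rV[R]_d -> nat -> R) (B T : nat) (h : 'I_n) : Prop :=
  exists cs : seq 'I_n,
    kcenter_run x (B %/ T) [::] cs /\ h \in cs /\
    (forall c, c \in cs -> (A (x c) T <= A (x h) T)%R).

End UVP.

(* Main.v *)
Require Import Defs.
From HB Require Import structures.
From mathcomp Require Import all_boot all_order all_algebra.
From mathcomp Require Import reals constructive_ereal.
From mathcomp Require Import ring lra.
Import Order.TTheory GRing.Theory Num.Theory.
Local Open Scope ring_scope.

Section Aux.
Variable R : realType.

Lemma cs_sq (d : nat) (a b : 'I_d -> R) :
  (\sum_i a i * b i) ^+ 2 <= (\sum_i a i ^+ 2) * (\sum_i b i ^+ 2).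
Proof.
have H : 0 <= \sum_i \sum_j (a i * b j - a j * b i) ^+ 2.
  by apply: sumr_ge0 => i _; apply: sumr_ge0 => j _; apply: sqr_ge0.
have E : \sum_i \sum_j (a i * b j - a j * b i) ^+ 2 =
   \sum_i \sum_j (a i ^+ 2 * b j ^+ 2) + \sum_i \sum_j (a j ^+ 2 * b i ^+ 2)
   - 2 * \sum_i \sum_j ((a i * b i) * (a j * b j)).
  rewrite mulr_sumr -big_split -sumrB /=; apply: eq_bigr => i _.
  rewrite mulr_sumr -big_split -sumrB /=; apply: eq_bigr => j _.
  ring.
have E1 : \sum_i \sum_j (a i ^+ 2 * b j ^+ 2) = (\sum_i a i ^+ 2) * (\sum_i b i ^+ 2).
  by rewrite mulr_suml; apply: eq_bigr => i _; rewrite mulr_sumr.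
have E2 : \sum_i \sum_j (a j ^+ 2 * b i ^+ 2) = (\sum_i a i ^+ 2) * (\sum_i b i ^+ 2).
  by rewrite mulrC mulr_suml; apply: eq_bigr => i _; rewrite mulr_sumr; apply: eq_bigr => j _; rewrite mulrC.
have E3 : \sum_i \sum_j ((a i * b i) * (a j * b j)) = (\sum_i a i * b i) ^+ 2.
  by rewrite expr2 mulr_suml; apply: eq_bigr => i _; rewrite mulr_sumr.
rewrite E E1 E2 E3 in H. lra.
Qed.

Lemma cs_sqrt (d : nat) (a b : 'I_d -> R) :
  \sum_i a i * b i <= Num.sqrt (\sum_i a i ^+ 2) * Num.sqrt (\sum_i b i ^+ 2).
Proof.
have P0 : 0 <= \sum_i a i ^+ 2 by apply: sumr_ge0 => i _; apply: sqr_ge0.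
rewrite -sqrtrM // (le_trans (ler_norm _)) // -sqrtr_sqr ler_wsqrtr //.
exact: cs_sq.
Qed.

Lemma edist_ge0 d (v w : 'rV[R]_d) : 0 <= edist v w.
Proof. exact: sqrtr_ge0. Qed.

Lemma edist_sym d (v w : 'rV[R]_d) : edist v w = edist w v.
Proof. by rewrite /edist; congr Num.sqrt; apply: eq_bigr => l _; rewrite -sqrrN opprB. Qed.

Lemma edist_refl d (v : 'rV[R]_d) : edist v v = 0.
Proof. by rewrite /edist big1 ?sqrtr0 // => l _; rewrite subrr expr0n. Qed.

Lemma edist_tri d (u v w : 'rV[R]_d) : edist u w <= edist u v + edist v w.
Proof.
rewrite /edist.
set a := fun l => u ord0 l - v ord0 l.
set b := fun l => v ord0 l - w ord0 l.
have P0 : 0 <= \sum_l a l ^+ 2 by apply: sumr_ge0 => i _; apply: sqr_ge0.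
have Q0 : 0 <= \sum_l b l ^+ 2 by apply: sumr_ge0 => i _; apply: sqr_ge0.
have CS := @cs_sqrt d a b.
have E : \sum_l (u ord0 l - w ord0 l) ^+ 2 =
   \sum_l a l ^+ 2 + 2 * \sum_l a l * b l + \sum_l b l ^+ 2.
  rewrite mulr_sumr -!big_split /=; apply: eq_bigr => l _; rewrite /a /b; ring.
rewrite E -[X in _ <= X]ger0_norm ?addr_ge0 ?sqrtr_ge0 // -sqrtr_sqr.
rewrite ler_wsqrtr //.
have SP := sqr_sqrtr P0. have SQ := sqr_sqrtr Q0.
rewrite /a /b in CS SP SQ *.
move: CS SP SQ.
set sP := Num.sqrt _. set sQ := Num.sqrt _.
set P := \sum_l _. set Q := \sum_l _. set S := \sum_l _.
move=> *; nra.
Qed.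
End Aux.

Section Aux2.
Variables (R : realType) (d n : nat) (x : 'I_n -> 'rV[R]_d).

Lemma dist_to_le (s : seq 'I_n) y c : c \in s ->
  (dist_to x s y <= (edist (x y) (x c))%:E)%E.
Proof.
elim: s => // a s IH; rewrite inE /dist_to big_cons ge_min.
case/orP=> [/eqP ->|/IH ->]; first by rewrite lexx.
by rewrite orbT.
Qed.

Lemma dist_to_ex (s : seq 'I_n) y z : (dist_to x s y <= z%:E)%E ->
  exists2 c, c \in s & edist (x y) (x c) <= z.
Proof.
elim: s => [|a s IH]; first by rewrite /dist_to big_nil leNgt ltry.
rewrite /dist_to big_cons ge_min; case/orP=> [h|/IH [c cs hc]].
  by exists a; rewrite ?inE ?eqxx // -lee_fin.
by exists c; rewrite // inE cs orbT.
Qed.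

Lemma dist_to_ge0 (s : seq 'I_n) y : (0 <= dist_to x s y)%E.
Proof.
elim: s => [|a s IH]; first by rewrite /dist_to big_nil leey.
by rewrite /dist_to big_cons le_min lee_fin edist_ge0 IH.
Qed.

Lemma dist_to_sub (s s' : seq 'I_n) y : {subset s <= s'} ->
  (dist_to x s' y <= dist_to x s y)%E.
Proof.
elim: s => [|a s IH] sub; first by rewrite /dist_to big_nil leey.
rewrite /dist_to big_cons le_min dist_to_le ?sub ?inE ?eqxx //=.
by apply: IH => z zs; apply: sub; rewrite inE zs orbT.
Qed.

Lemma greedy_sep (cs C : seq 'I_n) : greedy_ok x C cs ->
  forall y, y \notin C -> y \notin cs ->
  [/\ uniq cs, (forall c, c \in cs -> c \notin C) &
  forall p q, p \in cs -> q \in C ++ cs -> p != q ->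
    (dist_to x (catrev cs C) y <= (edist (x p) (x q))%:E)%E].
Proof.
elim: cs C => [|c cs IH] C /=.
  by move=> _ y _ _; split => // p q.
move=> [cC [Hmax G]] y yC; rewrite inE negb_or => /andP [yc ycs].
have yC' : y \notin c :: C by rewrite inE negb_or yc yC.
have [U N S] := IH _ G y yC' ycs.
have ccs : c \notin cs.
  by apply/negP => /N; rewrite inE eqxx.
split.
- by rewrite ccs U.
- move=> z; rewrite inE => /orP [/eqP -> //|/N]; by rewrite inE negb_or => /andP [].
move=> p q; rewrite inE => /orP [/eqP ->|pcs] qin pq.
  rewrite mem_cat inE in qin.
  case/orP: qin => [qC|/orP [/eqP qc|qcs]].
  + have h1 := @dist_to_le C c q qC.
    have h2 := Hmax y yC.
    have h3 : (dist_to x (catrev cs (c :: C)) y <= dist_to x C y)%E.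
      by apply: dist_to_sub => z zC; rewrite catrevE mem_cat inE zC !orbT.
    exact: le_trans h3 (le_trans h2 h1).
  + by rewrite -qc eqxx in pq.
  + rewrite edist_sym; apply: S => //; first by rewrite mem_cat inE eqxx.
    by rewrite eq_sym.
apply: S => //; move: qin; rewrite !mem_cat !inE.
by case/orP=> [->|/orP [->|->]]; rewrite ?orbT.
Qed.

End Aux2.

Section Aux3.
Variables (R : realType) (d n : nat) (x : 'I_n -> 'rV[R]_d).

Lemma kradius_ge0 C : (0 <= kradius x C)%E.
Proof.
rewrite /kradius; apply: (big_ind (fun v => 0 <= v)%E) => //.
  by move=> a b ha hb; rewrite le_max ha.
by move=> i _; apply: dist_to_ge0.
Qed.

Lemma kcover cs : greedy_ok x [::] cs -> forall C : {set 'I_n}, #|C| = size cs ->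
  forall y, (dist_to x (rev cs) y <= kradius x C + kradius x C)%E.
Proof.
move=> G C hC y.
have K0 := kradius_ge0 C.
case E: (kradius x C) K0 => [r| |] K0 //; last by rewrite leey.
rewrite lee_fin in K0.
rewrite -EFinD.
case yin: (y \in cs).
  have yr : y \in rev cs by rewrite mem_rev yin.
  apply: (le_trans (@dist_to_le _ _ _ x _ y y yr)).
  by rewrite edist_refl lee_fin; lra.
rewrite leNgt; apply/negP => Hlt.
have [U _ S] := @greedy_sep _ _ _ x cs [::] G y (negbT (in_nil y)) (negbT yin).
have hf : forall p, exists2 c, c \in C & edist (x p) (x c) <= r.
  move=> p; have := @le_bigmax _ (\bar R) _ (0%:E) (fun i => dist_to x (enum C) i) p.
  rewrite -/(kradius x C) E => /dist_to_ex [c]; rewrite mem_enum => cC hc.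
  by exists c.
pose f p := odflt p [pick c in C | edist (x p) (x c) <= r].
have hf' : forall p, f p \in C /\ edist (x p) (x (f p)) <= r.
  move=> p; rewrite /f; case: pickP => [c /andP [c1 c2] //|none].
  by have [c cC hc] := hf p; have := none c; rewrite cC hc.
have Hsep : forall p q, p \in y :: cs -> q \in y :: cs -> p != q ->
    (dist_to x (rev cs) y <= (edist (x p) (x q))%:E)%E.
  move=> p q; rewrite !inE => /orP [/eqP ->|pcs] /orP [/eqP ->|qcs] pq.
  - by rewrite eqxx in pq.
  - by apply: dist_to_le; rewrite mem_rev.
  - by rewrite edist_sym; apply: dist_to_le; rewrite mem_rev.
  - by move: (S p q pcs qcs pq); rewrite catrevE cats0.
have inj : {in y :: cs &, injective f}.
  move=> p q hp hq hpq; case: (eqVneq p q) => // pq; exfalso.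
  have := Hsep p q hp hq pq.
  have [_ h1] := hf' p; have [_ h2] := hf' q.
  have h3 := @edist_tri R d (x p) (x (f p)) (x q).
  rewrite [edist (x (f p)) _]edist_sym hpq in h3; rewrite hpq in h1.
  move=> h; have : (dist_to x (rev cs) y <= (r + r)%:E)%E.
    by apply: (le_trans h); rewrite lee_fin; lra.
  by rewrite leNgt Hlt.
have hU : uniq (map f (y :: cs)) by rewrite map_inj_in_uniq //= yin U.
have hS : {subset map f (y :: cs) <= enum C}.
  by move=> z /mapP [p _ ->]; rewrite mem_enum; exact: (hf' p).1.
by have := uniq_leq_size hU hS; rewrite size_map /= -cardE hC ltnn.
Qed.

End Aux3.

Section Aux4.
Variables (R : realType) (d n : nat) (x : 'I_n -> 'rV[R]_d).

Lemma greedy_uniq (cs C : seq 'I_n) : greedy_ok x C cs ->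
  uniq cs /\ (forall c, c \in cs -> c \notin C).
Proof.
elim: cs C => [|c cs IH] C //= [cC [_ G]].
have [U N] := IH _ G.
have ccs : c \notin cs by apply/negP => /N; rewrite inE eqxx.
split; first by rewrite ccs U.
move=> z; rewrite inE => /orP [/eqP -> //|/N]; by rewrite inE negb_or => /andP [].
Qed.

Lemma opt_cover cs : greedy_ok x [::] cs -> forall y,
  (dist_to x (rev cs) y <= opt_kradius x (size cs) + opt_kradius x (size cs))%E.
Proof.
move=> G y; rewrite /opt_kradius.
apply: (big_ind (fun v => dist_to x (rev cs) y <= v + v)%E).
- by rewrite leey.
- by move=> a b ha hb; rewrite minEle; case: ifP.
- by move=> C /eqP hC; apply: kcover.
Qed.

Lemma opt_fin cs : greedy_ok x [::] cs -> (0 < size cs)%N ->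
  0 <= fine (opt_kradius x (size cs)) /\
  opt_kradius x (size cs) = (fine (opt_kradius x (size cs)))%:E.
Proof.
move=> G s0.
have [U _] := @greedy_uniq _ _ G.
have ge0 : (0 <= opt_kradius x (size cs))%E.
  rewrite /opt_kradius; apply: (big_ind (fun v => 0 <= v)%E).
  - exact: leey.
  - by move=> a b ha hb; rewrite minEle; case: ifP.
  - by move=> C _; apply: kradius_ge0.
pose C0 := [set c in cs].
have hC0 : #|C0| == size cs by rewrite cardsE; apply/eqP/card_uniqP.
have le1 : (opt_kradius x (size cs) <= kradius x C0)%E.
  by rewrite /opt_kradius (bigD1 C0) //= ge_min lexx.
rewrite {}/C0 in hC0 le1.
case: cs G s0 U hC0 le1 ge0 => // c0 cs' G _ U hC0 le1 ge0.
have lt1 : (kradius x [set c in c0 :: cs'] < +oo)%E.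
  rewrite /kradius; apply: (big_ind (fun v => v < +oo)%E).
  - exact: ltry.
  - by move=> a b ha hb; rewrite gt_max ha hb.
  - move=> i _; apply: (le_lt_trans (@dist_to_le _ _ _ x _ i c0 _)); last exact: ltry.
    by rewrite mem_enum inE inE eqxx.
have fin : opt_kradius x (size (c0 :: cs')) \is a fin_num.
  rewrite ge0_fin_numE; last exact: ge0.
  exact: le_lt_trans le1 lt1.
split; last by rewrite fineK.
by rewrite -lee_fin fineK.
Qed.
End Aux4.

Theorem theorem4 (R : realType) (d n : nat) (x : 'I_n -> 'rV[R]_d)
  (T B : nat) (A : 'rV[R]_d -> nat -> R) (eps : R) :
  injective x ->
  (1 <= T)%N ->
  (1 <= B %/ T)%N -> (B %/ T <= n)%N ->
  (forall v b, (1 <= b)%N -> (b <= T)%N -> 0 <= A v b <= 1) ->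
  monotone_A T A ->
  0 < eps ->
  smooth_A x T A eps ->
  forall xhat : 'I_n, fullcent_output x A B T xhat ->
  forall xstar : 'I_n, (forall i : 'I_n, A (x i) T <= A (x xstar) T) ->
  A (x xhat) T >= (1 - 2 * eps * fine (opt_kradius x (B %/ T))) * A (x xstar) T.
Proof.
move=> inj T1 k1 kn Abnd mono eps0 smooth xhat [cs [[sz G] [hin hmax]]] xstar hstar.
rewrite -sz in k1 *.
have [r0 Hopt] := @opt_fin R d n x cs G k1.
set r := fine _ in r0 Hopt *.
have := @opt_cover R d n x cs G xstar; rewrite Hopt -EFinD => /dist_to_ex [c].
rewrite mem_rev => ccs hc.
have hsm := smooth c xstar.
have iT : (T.-1 < T)%N by rewrite ltn_predL.
have lb := le_trans hsm (_ : _ <= uvp_ratio (A (x c) (Ordinal iT).+1) (A (x xstar) (Ordinal iT).+1))%E.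
have {lb} lb := lb (ltac:(by rewrite (bigD1 (Ordinal iT)) //= ge_min lexx)).
move: lb; rewrite /= prednK // /uvp_ratio.
have /andP [s0 _] := Abnd (x xstar) T T1 (leqnn T).
have /andP [h0 _] := Abnd (x xhat) T T1 (leqnn T).
have hm := hmax c ccs.
case: eqP => [-> _|sne]; first by rewrite mulr0.
have spos : 0 < A (x xstar) T by rewrite lt_neqAle eq_sym s0 andbT; apply/eqP.
rewrite lee_fin ler_pdivlMr //.
rewrite edist_sym in hc.
move: hc hm spos s0 eps0 r0; set e := edist _ _; set a := A _ T; set s := A _ T; set h := A _ T.
move=> hc hm spos s0 eps0 r0 hh.
have := mulr_ge0 (mulr_ge0 (ltW eps0) s0) (_ : 0 <= r + r - e); last by lra.
Qed.
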